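(* Let $I$ be a connected and locally connected topological space and $h:I\to\mathbb{R}$ a positive continuous function attaining its lower bound at $v\in I$. (i) If $y\in I$, $\lambda\le h(y)$, $z\in C_{y,\lambda}$ and $h(z)>\lambda$, then $z$ lies in the interior of $C_{y,\lambda}$. (ii) If $x,x'\in I$, $\lambda\le h(x)$, $\lambda'\le h(x')$, $C_{x',\lambda'}\subset C_{x,\lambda}$ and $\lambda'>\lambda$, then $C_{x,\lambda}$ is a neighbourhood of $C_{x',\lambda'}$.
   Context: For $x\in I$ and $\lambda\le h(x)$, $C_{x,\lambda}$ denotes the maximal connected subset of $\{y\in I: h(y)\ge\lambda\}$ containing $x$. *)

(* Defs.v *)
From HB Require Import structures.
From mathcomp Require Import all_boot all_order all_algebra.
From mathcomp Require Import all_classical all_reals all_analysis.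
Set Implicit Arguments. Unset Strict Implicit. Unset Printing Implicit Defensive.
Import Order.TTheory GRing.Theory Num.Theory numFieldNormedType.Exports.
Local Open Scope classical_set_scope.
Local Open Scope ring_scope.

Definition locally_connected (T : topologicalType) : Prop :=
  forall (x : T) (U : set T), nbhs x U ->
    exists V : set T, [/\ open V, V x, connected V & V `<=` U].

Definition Ccomp (T : topologicalType) (R : realType) (h : T -> R)
  (x : T) (lambda : R) : set T :=
  connected_component [set y | lambda <= h y] x.

Definition nbhs_of_set (T : topologicalType) (A B : set T) : Prop :=
  exists U : set T, [/\ open U, B `<=` U & U `<=` A].

(* Main.v *)
Require Import Defs.
From HB Require Import structures.
From mathcomp Require Import all_boot all_order all_algebra.
From mathcomp Require Import all_classical all_reals all_analysis.
Import Order.TTheory GRing.Theory Num.Theory numFieldNormedType.Exports.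
Local Open Scope classical_set_scope.
Local Open Scope ring_scope.

Theorem mainTheorem6 (R : realType) (I : topologicalType) (h : I -> R) (v : I)
  (hconn : connected [set: I]) (hlc : locally_connected I)
  (hcont : continuous h) (hpos : forall x, 0 < h x)
  (hmin : forall x, h v <= h x) :
  (forall (y : I) (lambda : R) (z : I),
      lambda <= h y -> Ccomp h y lambda z -> lambda < h z ->
      interior (Ccomp h y lambda) z) /\
  (forall (x x' : I) (lambda lambda' : R),
      lambda <= h x -> lambda' <= h x' ->
      Ccomp h x' lambda' `<=` Ccomp h x lambda -> lambda < lambda' ->
      nbhs_of_set (Ccomp h x lambda) (Ccomp h x' lambda')).
Proof.
have part1 : forall (y : I) (lambda : R) (z : I),
      lambda <= h y -> Ccomp h y lambda z -> lambda < h z ->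
      interior (Ccomp h y lambda) z.
  move=> y l z _ Cz lz.
  have nz : nbhs z [set w | l < h w].
    have : nbhs (h z) [set r : R | l < r].
      by apply: open_nbhs_nbhs; split; [exact: open_gt|exact: lz].
    exact: (hcont z).
  have [V [oV Vz cV VU]] := hlc z _ nz.
  rewrite /interior /=; apply: (filterS _ (open_nbhs_nbhs (conj oV Vz))).
  rewrite /Ccomp (same_connected_component Cz).
  apply: connected_component_max => // w /VU /=; exact: ltW.
split => //.
move=> x x' l l' hx _ sub ll'.
exists (interior (Ccomp h x l)); split.
- exact: open_interior.
- move=> z Cz; apply: (part1 _ _ _ hx (sub _ Cz)).
  have := connected_component_sub Cz => /= lz.
  exact: lt_le_trans ll' lz.
- exact: interior_subset.
Qed.
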